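(* Let $M$ be an algebraic number field of degree $m$ with ring of integers $\mathbb{Z}_M$ and integral basis $(1,\omega_2,\ldots,\omega_m)$. Let $\alpha$ be an algebraic integer over $M$ of degree $n$ over $M$, let $K=M(\alpha)$, and let $0\neq\mu\in\mathbb{Z}_M$. Define the constants $c_{hji}$, $c_{hi}$, $c_2$, $c_5$, $d_{hi}$ as follows: \[ c_{hji}=\tfrac12\left|\alpha^{(hj)}-\alpha^{(hi)}\right|\ (i\ne j),\qquad c_{hi}=\frac{|\mu^{(h)}|}{\prod_{1\le j\le n,\,j\ne i}c_{hji}},\qquad c_5=2c_2\,\overline{|\alpha|},\qquad d_{hi}=c_{hi}\,c_5^{\,n-1}, \] where $c_2$ is the row norm (maximum absolute row sum) of $S^{-1}$, $S$ being the $m\times m$ matrix whose $j$-th row is $(1,\omega_2^{(j)},\ldots,\omega_m^{(j)})$. Fix indices $1\le h\le m$, $1\le i\le n$ and a constant $H>0$. Let $\mathcal{L}\subset\mathbb{R}^{2m+2}$ be the lattice generated by the $2m$ columns of the $(2m+2)\times 2m$ matrix whose first $2m$ rows form the $2m\times 2m$ identity matrix and whose last two rows are \[ \big(H\,\mathrm{Re}(1),\ H\,\mathrm{Re}(\omega_2^{(h)}),\ldots,H\,\mathrm{Re}(\omega_m^{(h)}),\ H\,\mathrm{Re}(\alpha^{(hi)}),\ H\,\mathrm{Re}(\alpha^{(hi)}\omega_2^{(h)}),\ldots,H\,\mathrm{Re}(\alpha^{(hi)}\omega_m^{(h)})\big), \] \[ \big(H\,\mathrm{Im}(1),\ H\,\mathrm{Im}(\omega_2^{(h)}),\ldots,H\,\mathrm{Im}(\omega_m^{(h)}),\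 H\,\mathrm{Im}(\alpha^{(hi)}),\ H\,\mathrm{Im}(\alpha^{(hi)}\omega_2^{(h)}),\ldots,H\,\mathrm{Im}(\alpha^{(hi)}\omega_m^{(h)})\big) \] (so the first entries of these two rows are $H$ and $0$). Let $b_1$ be the first vector of an LLL-reduced basis of $\mathcal{L}$. Assume that $x_1,\ldots,x_m,y_1,\ldots,y_m$ are integers, not all zero, with $A=\max(\max_k|x_k|,\max_k|y_k|)$, such that \[ \Big|x_1+\omega_2^{(h)}x_2+\cdots+\omega_m^{(h)}x_m-\alpha^{(hi)}y_1-\alpha^{(hi)}\omega_2^{(h)}y_2-\cdots-\alpha^{(hi)}\omega_m^{(h)}y_m\Big|\le d_{hi}\,A^{1-n}. \] If $A\le A_0$ for some constant $A_0>0$ and \[ |b_1|\ge\sqrt{(2m+1)\,2^{2m-1}}\cdot A_0, \] then \[ A\le\left(\frac{d_{hi}\,H}{A_0}\right)^{\frac{1}{n-1}}. \]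
   Context: Let $\sigma_1,\ldots,\sigma_m$ be the embeddings of $M$ into $\mathbb{C}$; for $\gamma\in M$ write $\gamma^{(j)}=\sigma_j(\gamma)$. Let $f(x)$ be the monic relative defining polynomial of $\alpha$ over $M$, and for $j=1,\ldots,m$ let $\alpha^{(j1)},\ldots,\alpha^{(jn)}$ be the roots of the polynomial obtained by applying $\sigma_j$ to the coefficients of $f$. The size $\overline{|\alpha|}$ is $\max_{j,k}|\alpha^{(jk)}|$. $|\cdot|$ on vectors is the Euclidean norm. An LLL-reduced basis is meant in the sense of Lenstra–Lenstra–Lovász (with the standard parameter $3/4$, as extended by Pohst), so that its first vector satisfies $|b_1|^2\le 2^{2m-1}|v|^2$ for every nonzero $v\in\mathcal{L}$ (the lattice having rank $2m$). *)

(* Defs.v *)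
From HB Require Import structures.
From mathcomp Require Import all_boot all_order all_algebra all_field.
From mathcomp Require Import complex.
From mathcomp Require Import reals exp.

Set Implicit Arguments.
Unset Strict Implicit.
Unset Printing Implicit Defensive.

Import Order.TTheory GRing.Theory Num.Theory.
Local Open Scope ring_scope.
Local Open Scope complex_scope.
Local Open Scope ring_scope.

Definition alg_int {T : nzRingType} (x : T) : Prop :=
  exists p : {poly int}, p \is monic /\ root (map_poly (fun z : int => z%:~R) p) x.

Section Defs.
Variable R : realType.

Definition creal (z : R[i]) : R := let: a +i* _ := z in a.
Definition cimag (z : R[i]) : R := let: _ +i* b := z in b.
Definition cabs (z : R[i]) : R := Num.sqrt (creal z ^+ 2 + cimag z ^+ 2).

(* sigma : 'I_m -> embeddings of M into C, pairwise distinct;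
   together with m = dim_Q M these are all the embeddings. *)
Definition distinct_embeddings (M : fieldExtType rat) (m : nat)
  (sigma : 'I_m -> {rmorphism M -> R[i]}) : Prop :=
  forall j j' : 'I_m, j != j' -> exists x : M, sigma j x != sigma j' x.

Definition integral_basis (M : fieldExtType rat) (m : nat) (omega : 'I_m -> M) : Prop :=
  [/\ forall k : 'I_m, val k = 0%N -> omega k = 1,
      forall k, alg_int (omega k),
      forall x : M, alg_int x ->
        exists z : 'I_m -> int, x = \sum_(k < m) (z k)%:~R * omega k
    & forall z : 'I_m -> int, \sum_(k < m) (z k)%:~R * omega k = 0 ->
        forall k, z k = 0].

Definition c_hji (m n : nat) (rts : 'I_m -> 'I_n -> R[i]) (h : 'I_m) (j i : 'I_n) : R :=
  cabs (rts h j - rts h i) / 2.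

Definition c_hi (M : fieldExtType rat) (m n : nat) (sigma : 'I_m -> {rmorphism M -> R[i]})
  (rts : 'I_m -> 'I_n -> R[i]) (mu : M) (h : 'I_m) (i : 'I_n) : R :=
  cabs (sigma h mu) / \prod_(j < n | j != i) c_hji rts h j i.

Definition Smat (M : fieldExtType rat) (m : nat) (sigma : 'I_m -> {rmorphism M -> R[i]})
  (omega : 'I_m -> M) : 'M[R[i]]_m := \matrix_(j, k) sigma j (omega k).

Definition c2 (M : fieldExtType rat) (m : nat) (sigma : 'I_m -> {rmorphism M -> R[i]})
  (omega : 'I_m -> M) : R :=
  \big[Num.max/0]_(j < m) \sum_(k < m) cabs (invmx (Smat sigma omega) j k).

Definition house (m n : nat) (rts : 'I_m -> 'I_n -> R[i]) : R :=
  \big[Num.max/0]_(j < m) \big[Num.max/0]_(k < n) cabs (rts j k).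

Definition c5 (M : fieldExtType rat) (m n : nat) (sigma : 'I_m -> {rmorphism M -> R[i]})
  (omega : 'I_m -> M) (rts : 'I_m -> 'I_n -> R[i]) : R :=
  2 * c2 sigma omega * house rts.

Definition d_hi (M : fieldExtType rat) (m n : nat) (sigma : 'I_m -> {rmorphism M -> R[i]})
  (omega : 'I_m -> M) (rts : 'I_m -> 'I_n -> R[i]) (mu : M) (h : 'I_m) (i : 'I_n) : R :=
  c_hi sigma rts mu h i * c5 sigma omega rts ^+ (n - 1).

Definition lat_entry (M : fieldExtType rat) (m n : nat) (sigma : 'I_m -> {rmorphism M -> R[i]})
  (omega : 'I_m -> M) (rts : 'I_m -> 'I_n -> R[i]) (h : 'I_m) (i : 'I_n) (k : 'I_(m + m)) : R[i] :=
  match split k with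
  | inl a => sigma h (omega a)
  | inr b => rts h i * sigma h (omega b)
  end.

Definition lat_gen (M : fieldExtType rat) (m n : nat) (sigma : 'I_m -> {rmorphism M -> R[i]})
  (omega : 'I_m -> M) (rts : 'I_m -> 'I_n -> R[i]) (h : 'I_m) (i : 'I_n) (H : R)
  : 'M[R]_(m + m + (1 + 1), m + m) :=
  col_mx (1%:M)
    (col_mx (\row_k (H * creal (lat_entry sigma omega rts h i k)))
            (\row_k (H * cimag (lat_entry sigma omega rts h i k)))).

Definition in_lattice (N k : nat) (G : 'M[R]_(N, k)) (v : 'cV[R]_N) : Prop :=
  exists z : 'I_k -> int, v = \sum_(l < k) (z l)%:~R *: col l G.

Definition dot (N : nat) (u v : 'cV[R]_N) : R := \sum_(l < N) u l 0 * v l 0.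
Definition enorm (N : nat) (v : 'cV[R]_N) : R := Num.sqrt (dot v v).

Definition lattice_basis (N k : nat) (G : 'M[R]_(N, k)) (bs : seq 'cV[R]_N) : Prop :=
  [/\ size bs = k,
      forall b, b \in bs -> in_lattice G b,
      forall v, in_lattice G v ->
        exists z : 'I_k -> int, v = \sum_(l < k) (z l)%:~R *: nth 0 bs l
    & forall c : 'I_k -> R, \sum_(l < k) c l *: nth 0 bs l = 0 -> forall l, c l = 0].

Definition gs_step (N : nat) (acc : seq 'cV[R]_N) (v : 'cV[R]_N) : seq 'cV[R]_N :=
  rcons acc (v - \sum_(c <- acc) (dot v c / dot c c) *: c).
Definition gram_schmidt (N : nat) (bs : seq 'cV[R]_N) : seq 'cV[R]_N :=
  foldl (@gs_step N) [::] bs.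
Definition gs_vec (N : nat) (bs : seq 'cV[R]_N) (i : nat) : 'cV[R]_N :=
  nth 0 (gram_schmidt bs) i.
Definition gs_mu (N : nat) (bs : seq 'cV[R]_N) (i j : nat) : R :=
  dot (nth 0 bs i) (gs_vec bs j) / dot (gs_vec bs j) (gs_vec bs j).

Definition LLL_reduced (N : nat) (bs : seq 'cV[R]_N) : Prop :=
  (forall i j : nat, (j < i < size bs)%N -> `|gs_mu bs i j| <= 1 / 2) /\
  (forall i : nat, (0 < i < size bs)%N ->
     (3 / 4 - gs_mu bs i i.-1 ^+ 2) * dot (gs_vec bs i.-1) (gs_vec bs i.-1)
       <= dot (gs_vec bs i) (gs_vec bs i)).

End Defs.

(* Main.v *)
Require Import Defs.
From HB Require Import structures.
From mathcomp Require Import all_boot all_order all_algebra all_field.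
From mathcomp Require Import complex.
From mathcomp Require Import reals exp.
From mathcomp Require Import ring lra.
Import Order.TTheory GRing.Theory Num.Theory.
Local Open Scope ring_scope.

Section Dot.
Variable R : realType.
Variable N : nat.
Implicit Types u v w : 'cV[R]_N.

Lemma dotC u v : dot u v = dot v u.
Proof. by apply: eq_bigr => l _; rewrite mulrC. Qed.

Lemma dotDl u v w : dot (u + v) w = dot u w + dot v w.
Proof. by rewrite /dot -big_split; apply: eq_bigr => l _; rewrite !mxE mulrDl. Qed.

Lemma dotZl a u w : dot (a *: u) w = a * dot u w.
Proof. by rewrite /dot mulr_sumr; apply: eq_bigr => l _; rewrite !mxE mulrA. Qed.

Lemma dot0l w : dot 0 w = 0.
Proof. by rewrite /dot big1 // => l _; rewrite mxE mul0r. Qed.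

Lemma dotNl u w : dot (- u) w = - dot u w.
Proof. by rewrite -scaleN1r dotZl mulN1r. Qed.

Lemma dotBl u v w : dot (u - v) w = dot u w - dot v w.
Proof. by rewrite dotDl dotNl. Qed.

Lemma dot_suml (I : Type) (r : seq I) (P : pred I) (F : I -> 'cV[R]_N) w :
  dot (\sum_(i <- r | P i) F i) w = \sum_(i <- r | P i) dot (F i) w.
Proof. by apply: (big_morph (fun u => dot u w)); [move=> ? ?; exact: dotDl|exact: dot0l]. Qed.

Lemma dot_ge0 v : 0 <= dot v v.
Proof. by apply: sumr_ge0 => l _; rewrite -expr2 sqr_ge0. Qed.

Lemma dot_eq0 v : dot v v = 0 -> v = 0.
Proof.
move=> /eqP; rewrite psumr_eq0; last by move=> l _; rewrite -expr2 sqr_ge0.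
move=> /allP H; apply/matrixP => l j; rewrite (ord1 j) mxE.
have := H l (mem_index_enum l); rewrite implyTb mulf_eq0 orbb => /eqP //.
Qed.

Lemma dotr0 v : dot v 0 = 0.
Proof. by rewrite dotC dot0l. Qed.

Lemma dotBr u v w : dot w (u - v) = dot w u - dot w v.
Proof. by rewrite dotC dotBl dotC [dot v w]dotC. Qed.
Lemma dotZr a u w : dot w (a *: u) = a * dot w u.
Proof. by rewrite dotC dotZl dotC. Qed.
Lemma dotDr u v w : dot w (u + v) = dot w u + dot w v.
Proof. by rewrite dotC dotDl dotC [dot v w]dotC. Qed.
Lemma dot_sumr (I : Type) (r : seq I) (P : pred I) (F : I -> 'cV[R]_N) w :
  dot w (\sum_(i <- r | P i) F i) = \sum_(i <- r | P i) dot w (F i).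
Proof. by rewrite dotC dot_suml; apply: eq_bigr => i _; rewrite dotC. Qed.

Lemma cauchy_schwarz v w : dot v w ^+ 2 <= dot v v * dot w w.
Proof.
have [/dot_eq0 ->|Dn0] := eqVneq (dot w w) 0.
  by rewrite !dotr0 expr0n /= mulr0.
have Dpos : 0 < dot w w by rewrite lt_def Dn0 dot_ge0.
set t := dot v w / dot w w.
have H := dot_ge0 (v - t *: w).
have E : dot (v - t *: w) (v - t *: w) = dot v v - t * dot v w - t * (dot v w - t * dot w w).
  rewrite !dotBl !dotBr !dotZl !dotZr [dot w v]dotC; ring.
rewrite E /t divfK // subrr mulr0 subr0 in H.
have : 0 <= (dot v v - dot v w / dot w w * dot v w) * dot w w by rewrite mulr_ge0 // ltW.
have -> : (dot v v - dot v w / dot w w * dot v w) * dot w w = dot v v * dot w w - dot v w ^+ 2.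
  by field; rewrite Dn0.
by rewrite subr_ge0.
Qed.

Lemma gs_inv (bs : seq 'cV[R]_N) :
  [/\ size (gram_schmidt bs) = size bs,
      forall i j, (i < size bs)%N -> (j < size bs)%N -> i != j ->
        dot (nth 0 (gram_schmidt bs) i) (nth 0 (gram_schmidt bs) j) = 0 &
      forall l, (l < size bs)%N -> exists c : nat -> R,
        nth 0 bs l = nth 0 (gram_schmidt bs) l + \sum_(j < l) c j *: nth 0 (gram_schmidt bs) j].
Proof.
elim/last_ind: bs => [|s b [Hsz Horth Hdec]]; first by split.
rewrite /gram_schmidt foldl_rcons -/(gram_schmidt s) /gs_step.
set G := gram_schmidt s.
set w := b - _.
have hw : forall j, (j < size s)%N -> dot w (nth 0 G j) = 0.
  move=> j hj; rewrite /w dotBl (big_nth 0) big_mkord dot_suml.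
  have hjG : (j < size G)%N by rewrite Hsz.
  rewrite (bigD1 (Ordinal hjG)) //= big1; last first.
    move=> k hk; have hk' : (k : nat) != j by apply: contra hk => /eqP hkj; apply/eqP/val_inj.
    have hks : (k < size s)%N by rewrite -Hsz.
    by rewrite dotZl (Horth k j hks hj hk') mulr0.
  rewrite dotZl addr0.
  have [/dot_eq0 ->|Dn0] := eqVneq (dot (nth 0 G j) (nth 0 G j)) 0.
    by rewrite !dotr0 mulr0 subr0.
  by rewrite divfK // subrr.
split.
- by rewrite !size_rcons Hsz.
- move=> i j; rewrite size_rcons !ltnS [(i <= _)%N]leq_eqVlt [(j <= _)%N]leq_eqVlt => /orP[/eqP ->|hi] /orP[/eqP ->|hj] hij.
  + by rewrite eqxx in hij.
  + by rewrite !nth_rcons Hsz ltnn eqxx hj hw.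
  + by rewrite !nth_rcons Hsz ltnn eqxx hi dotC hw.
  + by rewrite !nth_rcons Hsz hi hj Horth.
- move=> l; rewrite size_rcons ltnS leq_eqVlt => /orP[/eqP ->|hl].
  + exists (fun j => dot b (nth 0 G j) / dot (nth 0 G j) (nth 0 G j)).
    rewrite !nth_rcons Hsz ltnn eqxx.
    under eq_bigr => j _ do rewrite nth_rcons Hsz (ltn_ord j).
    rewrite /w (big_nth 0) big_mkord Hsz subrK //.
  + have [c Hc] := Hdec l hl; exists c.
    rewrite !nth_rcons Hsz hl Hc; congr (_ + _).
    apply: eq_bigr => j _; rewrite nth_rcons Hsz (ltn_trans (ltn_ord j) hl) //.
Qed.


End Dot.

Section LLL.
Variable R : realType.
Variable N : nat.

Lemma lovasz_step (bs : seq 'cV[R]_N) (hLLL : LLL_reduced bs) i :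
  (0 < i < size bs)%N ->
  dot (gs_vec bs i.-1) (gs_vec bs i.-1) <= 2 * dot (gs_vec bs i) (gs_vec bs i).
Proof.
move=> hi; case: hLLL => H1 H2.
have H := H2 i hi.
have hmu : `|gs_mu bs i i.-1| <= 1 / 2.
  apply: H1; case/andP: hi => hi0 his; by rewrite ltn_predL hi0.
move: H hmu.
set mu := gs_mu bs i i.-1; set D1 := dot _ _; set D := dot (gs_vec bs i) _ => H.
have hD1 : 0 <= D1 by exact: dot_ge0.
rewrite ler_norml => /andP[ha hb].
have hmu2 : mu ^+ 2 <= 1 / 4 by nra.
have h3 : mu ^+ 2 * D1 <= 1 / 4 * D1 by rewrite ler_wpM2r.
nra.
Qed.

Lemma lovasz_chain (bs : seq 'cV[R]_N) (hLLL : LLL_reduced bs) k :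
  (k < size bs)%N ->
  dot (gs_vec bs 0) (gs_vec bs 0) <= 2 ^+ k * dot (gs_vec bs k) (gs_vec bs k).
Proof.
elim: k => [|k IH] hk; first by rewrite expr0 mul1r.
have := @lovasz_step bs hLLL k.+1 hk.
rewrite /= => hs.
apply: (le_trans (IH (ltnW hk))).
rewrite exprSr -mulrA ler_wpM2l // exprn_ge0 //.
Qed.

Lemma gs0 (bs : seq 'cV[R]_N) : (0 < size bs)%N -> gs_vec bs 0 = nth 0 bs 0.
Proof.
move=> h; have [_ _ Gdec] := @gs_inv _ _ bs.
by have [c ->] := Gdec 0%N h; rewrite big_ord0 addr0.
Qed.

Lemma LLL_short (bs : seq 'cV[R]_N) K (hK : size bs = K) (hLLL : LLL_reduced bs)
  (z : 'I_K -> int) (l0 : 'I_K) (hl0 : z l0 != 0) :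
  dot (nth 0 bs 0) (nth 0 bs 0) <= 2 ^+ K.-1 *
    dot (\sum_(l < K) (z l)%:~R *: nth 0 bs l) (\sum_(l < K) (z l)%:~R *: nth 0 bs l).
Proof.
set v := \sum_(l < K) _.
have [Gsz Gorth Gdec] := @gs_inv _ _ bs.
have hdot_lt : forall j k, (j < k)%N -> (k < size bs)%N -> dot (nth 0 bs j) (gs_vec bs k) = 0.
  move=> j k hjk hk; have hj : (j < size bs)%N by apply: ltn_trans hk.
  have [c ->] := Gdec j hj.
  rewrite dotDl dot_suml big1 ?addr0; first by rewrite /gs_vec Gorth // neq_ltn hjk.
  move=> i _; rewrite dotZl /gs_vec Gorth ?mulr0 //.
    by apply: ltn_trans hj.
  by rewrite neq_ltn (ltn_trans (ltn_ord i) hjk).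
have hdot_eq : forall k, (k < size bs)%N -> dot (nth 0 bs k) (gs_vec bs k) = dot (gs_vec bs k) (gs_vec bs k).
  move=> k hk; have [c ->] := Gdec k hk.
  rewrite dotDl dot_suml big1 ?addr0 //.
  move=> i _; rewrite dotZl /gs_vec Gorth ?mulr0 //.
    by apply: ltn_trans hk.
  by rewrite neq_ltn (ltn_ord i).
case: (@arg_maxnP _ l0 (fun l => z l != 0) val hl0) => k hk kmax.
have hkK : (k < size bs)%N by rewrite hK.
set Dk := dot (gs_vec bs k) (gs_vec bs k).
have Hvg : dot v (gs_vec bs k) = (z k)%:~R * Dk.
  rewrite /v dot_suml (bigD1 k) //= big1 ?addr0; first by rewrite dotZl hdot_eq.
  move=> j hj; rewrite dotZl.
  have [->|hzj] := eqVneq (z j) 0; first by rewrite mulr0z mul0r.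
  have hjk : (j < k)%N.
    rewrite ltn_neqAle (kmax j hzj : (j <= k)%N) andbT; apply: contra hj => /eqP e; by apply/eqP/val_inj.
  by rewrite hdot_lt ?mulr0.
have CS := @cauchy_schwarz _ _ v (gs_vec bs k).
rewrite Hvg -/Dk in CS.
have hchain := @lovasz_chain bs hLLL k hkK.
rewrite gs0 ?(leq_ltn_trans (leq0n _) hkK) // -/Dk in hchain.
have hz1 : 1 <= (z k)%:~R ^+ 2 :> R.
  rewrite -rmorphXn /= ler1z -(real_normK (num_real _)).
  by rewrite exprn_ege1 // -gtz0_ge1 normr_gt0.
have hvv : 0 <= dot v v by exact: dot_ge0.
have hDk : 0 <= Dk by exact: dot_ge0.
have hk1 : 2 ^+ k <= 2 ^+ K.-1 :> R.
  apply: ler_weXn2l; first by rewrite ler1n.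
  by rewrite -ltnS prednK // (leq_ltn_trans (leq0n _) (ltn_ord k)).
have [D0|Dpos] := eqVneq Dk 0.
  rewrite D0 mulr0 in hchain.
  by apply: (le_trans hchain); rewrite mulr_ge0 // exprn_ge0.
have Dgt0 : 0 < Dk by rewrite lt_def Dpos hDk.
have hDv : Dk <= dot v v.
  rewrite -(ler_pM2r Dgt0).
  apply: le_trans CS.
  rewrite exprMn expr2 -[Dk * Dk]mul1r -expr2.
  rewrite ler_wpM2r ?exprn_ge0 //.
apply: (le_trans hchain).
apply: (le_trans (ler_wpM2l (exprn_ge0 _ (ler0n _ 2)) hDv)).
by rewrite ler_wpM2r.
Qed.

End LLL.

Section Cx.
Variable R : realType.
Lemma crealD (a b : R[i]) : creal (a + b) = creal a + creal b.
Proof. by case: a b => ? ? [] ? ?. Qed.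
Lemma cimagD (a b : R[i]) : cimag (a + b) = cimag a + cimag b.
Proof. by case: a b => ? ? [] ? ?. Qed.
Lemma creal_sum (I : Type) (r : seq I) (P : pred I) (F : I -> R[i]) :
  creal (\sum_(j <- r | P j) F j) = \sum_(j <- r | P j) creal (F j).
Proof. by apply: (big_morph (@creal R)); [exact: crealD|]. Qed.
Lemma cimag_sum (I : Type) (r : seq I) (P : pred I) (F : I -> R[i]) :
  cimag (\sum_(j <- r | P j) F j) = \sum_(j <- r | P j) cimag (F j).
Proof. by apply: (big_morph (@cimag R)); [exact: cimagD|]. Qed.
Lemma creal_mulz (a : R[i]) (k : int) : creal (a * k%:~R) = creal a * k%:~R.
Proof.
rewrite -(rmorph_int (@real_complex R) k).
by case: a => a1 a2 /=; rewrite mulr0 subr0.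
Qed.
Lemma cimag_mulz (a : R[i]) (k : int) : cimag (a * k%:~R) = cimag a * k%:~R.
Proof.
rewrite -(rmorph_int (@real_complex R) k).
by case: a => a1 a2 /=; rewrite mulr0 add0r.
Qed.
End Cx.

Lemma split_lshift m n (a : 'I_m) : split (lshift n a) = inl a.
Proof. by rewrite -[lshift n a]/(unsplit (inl a)) unsplitK. Qed.
Lemma split_rshift m n (a : 'I_n) : split (rshift m a) = inr a.
Proof. by rewrite -[rshift m a]/(unsplit (inr a)) unsplitK. Qed.

Theorem theorem3 (R : realType) (M : fieldExtType rat) (m : nat)
  (hm : \dim {:M} = m)
  (sigma : 'I_m -> {rmorphism M -> R[i]}) (hsigma : distinct_embeddings sigma)
  (omega : 'I_m -> M) (homega : integral_basis omega)
  (n : nat) (hn : (1 < n)%N)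
  (f : {poly M}) (hfmon : f \is monic) (hfirr : irreducible_poly f)
  (hfsize : size f = n.+1)
  (rts : 'I_m -> 'I_n -> R[i])
  (hrts : forall j : 'I_m, map_poly (sigma j) f = \prod_(k < n) ('X - (rts j k)%:P))
  (halpha : forall (j : 'I_m) (k : 'I_n), alg_int (rts j k))
  (mu : M) (hmu : alg_int mu) (hmu0 : mu != 0)
  (h : 'I_m) (i : 'I_n) (H : R) (hH : 0 < H)
  (bs : seq 'cV[R]_(m + m + (1 + 1)))
  (hbasis : lattice_basis (lat_gen sigma omega rts h i H) bs)
  (hLLL : LLL_reduced bs)
  (x y : 'I_m -> int) (hxy : exists k, x k != 0 \/ y k != 0)
  (A : R) (hAdef : A = (\max_(k < m) maxn `|x k|%N `|y k|%N)%:R)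
  (hineq : cabs (\sum_(k < m) sigma h (omega k) * (x k)%:~R
                 - \sum_(k < m) rts h i * sigma h (omega k) * (y k)%:~R)
           <= d_hi sigma omega rts mu h i * A ^- (n - 1))
  (A0 : R) (hA0 : 0 < A0) (hAA0 : A <= A0)
  (hb1 : Num.sqrt (((2 * m + 1) * 2 ^ (2 * m - 1))%:R) * A0 <= enorm (head 0 bs)) :
  A <= powR (d_hi sigma omega rts mu h i * H / A0) (n - 1)%:R^-1.
Proof.
set d := d_hi sigma omega rts mu h i in hineq *.
set L := (\sum_(k < m) _ - _) in hineq.
set G := lat_gen sigma omega rts h i H.
set z : 'I_(m + m) -> int := fun l => match split l with inl a => x a | inr b => - y b end.
set v : 'cV[R]_(m + m + (1 + 1)) := \sum_(l < m + m) (z l)%:~R *: col l G.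
have hentry : forall r, v r 0 = \sum_(l < m + m) (z l)%:~R * G r l.
  by move=> r; rewrite /v summxE; apply: eq_bigr => l _; rewrite !mxE.
have htop : forall r : 'I_(m + m), v (lshift (1 + 1) r) 0 = (z r)%:~R.
  move=> r; rewrite hentry (bigD1 r) //= big1 ?addr0.
    by rewrite /G /lat_gen col_mxEu mxE eqxx mulr1.
  move=> l hl; rewrite /G /lat_gen col_mxEu mxE eq_sym (negbTE hl) mulr0 //.
have hLsum : \sum_(l < m + m) lat_entry sigma omega rts h i l * (z l)%:~R = L.
  rewrite big_split_ord /= /L; congr (_ + _).
    by apply: eq_bigr => a _; rewrite /lat_entry /z !split_lshift.
  rewrite -sumrN; apply: eq_bigr => b _.
  by rewrite /lat_entry /z !split_rshift mulrNz mulrN.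
have hre : v (rshift (m + m) (lshift 1 ord0)) 0 = H * creal L.
  rewrite hentry -hLsum creal_sum mulr_sumr; apply: eq_bigr => l _.
  rewrite /G /lat_gen col_mxEd col_mxEu mxE creal_mulz; ring.
have him : v (rshift (m + m) (rshift 1 ord0)) 0 = H * cimag L.
  rewrite hentry -hLsum cimag_sum mulr_sumr; apply: eq_bigr => l _.
  rewrite /G /lat_gen col_mxEd col_mxEd mxE cimag_mulz; ring.
have hvv : dot v v = \sum_(r < m + m) (z r)%:~R ^+ 2 + (H * creal L) ^+ 2 + (H * cimag L) ^+ 2.
  rewrite /dot big_split_ord /= -addrA; congr (_ + _).
    by apply: eq_bigr => r _; rewrite htop expr2.
  rewrite big_split_ord /= !big_ord1 -!expr2; congr (_ ^+ 2 + _ ^+ 2).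
    by rewrite -hre; congr (v _ _); apply: val_inj.
  by rewrite -him; congr (v _ _); apply: val_inj.
have m0 : (0 < m)%N by apply: (leq_ltn_trans (leq0n _) (ltn_ord h)).
case: hbasis => hsz _ hspan _.
have [z' hv] : exists z' : 'I_(m + m) -> int, v = \sum_(l < m + m) (z' l)%:~R *: nth 0 bs l.
  by apply: hspan; exists z.
have [l0 hl0] : exists l0, z' l0 != 0.
  case: (boolP [exists l, z' l != 0]) => [/existsP //|/existsPn hall].
  have v0 : v = 0.
    rewrite hv big1 // => l _; have := hall l; rewrite negbK => /eqP ->.
    by rewrite scale0r.
  case: hxy => k [hk|hk].
  - have := htop (lshift m k); rewrite v0 mxE /z split_lshift => /eqP.
    by rewrite eq_sym intr_eq0 (negbTE hk).
  - have := htop (rshift m k); rewrite v0 mxE /z split_rshift => /eqP.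
    by rewrite eq_sym intr_eq0 oppr_eq0 (negbTE hk).
have hLLLb := @LLL_short _ _ bs (m + m) hsz hLLL z' l0 hl0.
rewrite -hv hvv in hLLLb.
set S := \sum_(r < m + m) _ in hLLLb.
have hmax : forall a, (maxn `|x a| `|y a| <= \max_(k < m) maxn `|x k| `|y k|)%N.
  move=> a; exact: (@leq_bigmax _ (fun k => maxn `|x k| `|y k|) a).
have hS : S <= (m + m)%:R * A ^+ 2.
  rewrite (_ : (m + m)%:R * A ^+ 2 = \sum_(r < m + m) A ^+ 2); last first.
    by rewrite sumr_const card_ord mulr_natl.
  apply: ler_sum => r _.
  have hzA : (`|z r| <= \max_(k < m) maxn `|x k| `|y k|)%N.
    rewrite /z; case: (split r) => a.
    - by apply: (@leq_trans (maxn `|x a| `|y a|)); [rewrite leq_maxl|exact: hmax].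
    - rewrite abszN.
      by apply: (@leq_trans (maxn `|x a| `|y a|)); [rewrite leq_maxr|exact: hmax].
  rewrite -real_normK ?num_real // -intr_norm -natr_absz hAdef.
  by rewrite !expr2 ler_pM ?ler0n ?ler_nat.
have hD0 : ((2 * m + 1) * 2 ^ (2 * m - 1))%:R * A0 ^+ 2 <= dot (nth 0 bs 0) (nth 0 bs 0).
  have hpos : 0 <= Num.sqrt (((2 * m + 1) * 2 ^ (2 * m - 1))%:R) * A0.
    by rewrite mulr_ge0 ?sqrtr_ge0 ?ltW.
  have := ler_pM hpos hpos hb1 hb1.
  rewrite -!expr2 exprMn sqr_sqrtr ?ler0n // /enorm sqr_sqrtr; last exact: dot_ge0.
  by rewrite nth0.
have e2 : (2 * m - 1)%N = (m + m).-1 by rewrite mul2n -addnn subn1.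
rewrite e2 natrM natrX in hD0.
set P := 2 ^+ (m + m).-1 in hD0 hLLLb.
have Ppos : 0 < P :> R by rewrite exprn_gt0.
set cr := creal L in hLLLb; set ci := cimag L in hLLLb.
have hc2 : cabs L ^+ 2 = cr ^+ 2 + ci ^+ 2.
  by rewrite /cabs sqr_sqrtr // addr_ge0 ?sqr_ge0.
set c := cabs L in hineq hc2.
have hc0 : 0 <= c by rewrite /c /cabs sqrtr_ge0.
have h1 : (2 * m + 1)%:R * A0 ^+ 2 <= S + (H * cr) ^+ 2 + (H * ci) ^+ 2.
  rewrite -(ler_pM2l Ppos); apply: le_trans hLLLb; apply: le_trans hD0.
  by rewrite mulrA [P * _]mulrC.
have hA0' : 0 <= A.
  by rewrite hAdef ler0n.
have hA2 : A ^+ 2 <= A0 ^+ 2 by rewrite !expr2 ler_pM.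
have hmA : (m + m)%:R * A ^+ 2 <= (m + m)%:R * A0 ^+ 2 by rewrite ler_wpM2l.
rewrite natrD natrM in h1.
rewrite natrD in hmA.
have h2 : A0 ^+ 2 <= (H * c) ^+ 2.
  rewrite exprMn hc2.
  set T := H ^+ 2 * _.
  rewrite -addrA (_ : (H * cr) ^+ 2 + (H * ci) ^+ 2 = T) in h1; last by rewrite /T; ring.
  lra.
have hHc : 0 <= H * c by apply: mulr_ge0 => //; exact: ltW.
have h3 : A0 <= H * c by nra.
have hA1 : 1 <= A.
  rewrite hAdef ler1n; case: hxy => k hk.
  apply: (@leq_trans (maxn `|x k| `|y k|)) _ (hmax k).
  by rewrite leq_max !absz_gt0; case: hk => ->; rewrite ?orbT.
set An := A ^+ (n - 1).
have Anpos : 0 < An by rewrite exprn_gt0 // (lt_le_trans ltr01 hA1).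
have h4 : A0 <= H * (d * An^-1) := le_trans h3 (ler_wpM2l (ltW hH) hineq).
have h5 : A0 * An <= H * d.
  have e : H * (d * An^-1) * An = H * d by field; rewrite gt_eqF.
  by rewrite -e ler_pM2r.
have hAn : An <= d * H / A0.
  by rewrite ler_pdivlMr // mulrC [d * H]mulrC.
have eA : A = An `^ (n - 1)%:R^-1.
  rewrite /An -powR_mulrn; last exact: hA0'.
  rewrite -powRrM mulfV; first by rewrite powRr1.
  by rewrite pnatr_eq0 subn_eq0 -ltnNge.
rewrite {1}eA; apply: ge0_ler_powR => //.
- by rewrite invr_ge0 ler0n.
- by rewrite nnegrE ltW.
- by rewrite nnegrE (le_trans (ltW Anpos) hAn).
Qed.
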